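(* Let $T$ be an $X$-tree. A cord $ab\in\binom{X}{2}$ is a co-loop of $\mathbb{M}(T)$, i.e. it is contained in every edge-weight lasso for $T$ (equivalently in every basis of $\mathbb{M}(T)$), if and only if $ab$ is a proper $T$-cherry.
   Context: Let $X$ be a finite set with $|X|=n\ge 3$. An $X$-tree is a finite tree $T=(V,E)$ whose set of degree-1 vertices is exactly $X$ and which has no vertices of degree $2$. A cord is a $2$-subset $xy$ of $X$. For each cord $xy$, $\lambda^T_{xy}:\mathbb{R}^E\to\mathbb{R}$, $\omega\mapsto\sum_{e\in E(x|y)}\omega(e)$ where $E(x|y)$ is the set of edges on the path from $x$ to $y$. $\mathbb{M}(T)$ is the matroid on ground set $\binom{X}{2}$ whose rank function is $\mathrm{rk}^T(\mathcal{L})=\dim\mathrm{span}\{\lambda^T_{xy}:xy\in\mathcal{L}\}$; its rank is $|E|$. An edge-weight lasso for $T$ is a set $\mathcal{L}\subseteq\binom{X}{2}$ with $\mathrm{rk}^T(\mathcal{L})=|E|$. For $x\in X$ let $e_x$ be the unique edge containing $x$. A cord $ab$ is a $T$-cherry if $e_a$ and $e_b$ share a vertex, and a proper $T$-cherry if moreover this shared vertex has degree $3$. *)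

(* Defs.v *)
From HB Require Import structures.
From mathcomp Require Import all_boot all_order all_algebra.
Set Implicit Arguments. Unset Strict Implicit. Unset Printing Implicit Defensive.
Import Order.TTheory GRing.Theory Num.Theory.

Section XTrees.
Variable V : finType.
Variable e : rel V.

Definition deg (v : V) : nat := #|[set w | e v w]|.

Definition Edges : {set {set V}} := [set [set uv.1; uv.2] | uv in [set uv : V * V | e uv.1 uv.2]].

Definition edgeT := {f : {set V} | f \in Edges}.

Definition is_tree : Prop :=
  [/\ symmetric e, irreflexive e, (forall u v, connect e u v) &
      (forall p : seq V, uniq p -> 2 < size p -> ~~ cycle e p)].

Definition is_Xtree (X : {set V}) : Prop :=
  [/\ is_tree, X = [set v | deg v == 1] & forall v, deg v != 2].

Definition walk_edges (x : V) (p : seq V) : seq {set V} :=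
  [seq [set uv.1; uv.2] | uv <- zip (x :: p) p].

(* f is an edge of the (simple) path from x to y; a simple path x :: t
   has size t < #|V|, so the bounded search covers all simple paths *)
Definition on_path (x y : V) (f : {set V}) : bool :=
  [exists k : 'I_#|V|, [exists t : k.-tuple V,
     [&& path e x t, last x t == y, uniq (x :: t) & f \in walk_edges x t]]].

Definition on_cord_path (c : {set V}) (f : {set V}) : bool :=
  [exists x in c, exists y in c, (x != y) && on_path x y f].

Definition is_cord (X : {set V}) (c : {set V}) : bool := (c \subset X) && (#|c| == 2).

Variable R : realFieldType.

(* lambda^T_{xy} : R^E -> R, omega |-> sum_{f in E(x|y)} omega f,
   represented by its coefficient vector in R^E (the dual basis) *)
Definition lam (c : {set V}) : {ffun edgeT -> R^o} :=
  [ffun f : edgeT => (on_cord_path c (val f))%:R%R].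

Definition rkT (L : {set {set V}}) : nat :=
  \dim (span [seq lam c | c <- enum L]).

Definition is_lasso (X : {set V}) (L : {set {set V}}) : Prop :=
  {subset L <= is_cord X} /\ rkT L = #|Edges|.

End XTrees.

Section Cherries.
Variable V : finType.
Variable e : rel V.

Definition pendant_edge (x : V) : {set V} :=
  odflt set0 [pick f in Edges e | x \in f].

Definition is_cherry (a b : V) : bool :=
  [exists v, (v \in pendant_edge a) && (v \in pendant_edge b)].

Definition is_proper_cherry (a b : V) : bool :=
  [exists v, [&& v \in pendant_edge a, v \in pendant_edge b & deg e v == 3]].
End Cherries.

(* Main.v *)
Require Import Defs.
From HB Require Import structures.
From mathcomp Require Import all_boot all_order all_algebra zify ring.
Set Implicit Arguments. Unset Strict Implicit. Unset Printing Implicit Defensive.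

Section Graph.
Variables (V : finType) (e : rel V).
Hypothesis esym : symmetric e.
Hypothesis eirr : irreflexive e.
Hypothesis econn : forall u v, connect e u v.
Hypothesis eacyc : forall p : seq V, uniq p -> 2 < size p -> ~~ cycle e p.
Hypothesis nodeg2 : forall v, deg e v != 2.
Hypothesis HX3 : 3 <= #|[set v | deg e v == 1]|.

Definition Ecut (f : {set V}) : rel V := fun x y => e x y && ([set x; y] != f).
Definition side u n z := connect (Ecut [set u; n]) n z.

Lemma Ecut_sym f : symmetric (Ecut f).
Proof. by move=> x y; rewrite /Ecut esym setUC. Qed.

Lemma cS f x y : connect (Ecut f) x y = connect (Ecut f) y x.
Proof. exact: (sym_connect_sym (Ecut_sym f)). Qed.

Lemma Ecut_sub f : subrel (Ecut f) e.
Proof. by move=> x y /andP[]. Qed.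

Lemma path_avoid p q x t : path e x t -> p \notin x :: t ->
  connect (Ecut [set p; q]) x (last x t).
Proof.
elim: t x => [|y t IH] x /=; first by rewrite connect0.
move=> /andP[exy pt]; rewrite in_cons negb_or => /andP[px pyt].
apply: connect_trans (IH y pt pyt); apply: connect1; rewrite /Ecut exy /=.
apply/negP => /eqP H.
have: p \in [set x; y] by rewrite H !inE eqxx.
rewrite !inE (negbTE px) /=; move: pyt; rewrite in_cons negb_or => /andP[/negbTE -> _].
by [].
Qed.

Lemma cutA u n : e u n -> ~~ connect (Ecut [set u; n]) u n.
Proof.
move=> eun; apply/negP => /connectP [t pt lt]; move: lt.
case/shortenP: pt => t' pt' ut' _ lt.
case: t' pt' ut' lt => [|y [|z r]] pt' ut' lt.
- by rewrite /= in lt; subst n; rewrite eirr in eun.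
- by rewrite /= in lt; subst y; move: pt'; rewrite /= /Ecut eqxx andbF.
- have := eacyc ut' isT; apply/negP.
  rewrite /cycle rcons_path negbK; apply/andP; split.
    by apply: (sub_path (@Ecut_sub _)) pt'.
  by rewrite -lt esym.
Qed.

Lemma two_sides p q z :
  connect (Ecut [set p; q]) p z || connect (Ecut [set p; q]) q z.
Proof.
have := econn p z; case/connectP => t pt ->.
set P := fun x => connect (Ecut [set p; q]) p x || connect (Ecut [set p; q]) q x.
suff H : forall x s, path e x s -> P x -> P (last x s).
  by apply: H pt _; rewrite /P connect0.
move=> x s; elim: s x => //= y s IH x /andP[exy ps] Px; apply: IH ps _.
case: (eqVneq [set x; y] [set p; q]) => [H | H].
  have: y \in [set p; q] by rewrite -H !inE eqxx orbT.
  by rewrite /P !inE => /orP[] /eqP ->; rewrite connect0 ?orbT.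
have exy' : Ecut [set p; q] x y by rewrite /Ecut exy H.
case/orP: Px => Px; apply/orP; [left|right]; apply: connect_trans Px _; exact: connect1.
Qed.

Lemma sep_bits p q x y : e p q ->
  connect (Ecut [set p; q]) x y =
  (connect (Ecut [set p; q]) p x == connect (Ecut [set p; q]) p y).
Proof.
move=> epq.
have hA := cutA epq.
case Hx: (connect (Ecut [set p; q]) p x); case Hy: (connect (Ecut [set p; q]) p y).
- by rewrite eqxx; apply: connect_trans Hy; rewrite cS.
- apply/negP => Hxy; by rewrite (connect_trans Hx Hxy) in Hy.
- apply/negP => Hxy; have Hyx : connect (Ecut [set p; q]) y x by rewrite cS.
  by rewrite (connect_trans Hy Hyx) in Hx.
- rewrite eqxx.
  have := two_sides p q x; have := two_sides p q y.
  rewrite Hx Hy !orFb => qy qx.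
  by apply: connect_trans _ qy; rewrite cS.
Qed.

Lemma walk_sep f t x : path e x t -> uniq (x :: t) -> f \in walk_edges x t ->
  ~~ connect (Ecut f) x (last x t).
Proof.
elim: t x => // y t IH x /= /andP[exy pt] /andP[xnin ut].
rewrite /walk_edges /= in_cons.
case: (eqVneq f [set x; y]) => [-> _ | fxy] /=.
  apply/negP => H.
  have H2 := path_avoid y pt xnin.
  have : connect (Ecut [set x; y]) x y.
    by apply: connect_trans H _; rewrite cS.
  by apply/negP; apply: cutA.
move=> fw; have := IH y pt ut fw; apply: contra => H.
have exy' : Ecut f y x by rewrite /Ecut esym exy setUC eq_sym fxy.
exact: connect_trans (connect1 exy') H.
Qed.

Lemma walk_avoid f t x : path e x t -> f \notin walk_edges x t -> path (Ecut f) x t.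
Proof.
elim: t x => // y t IH x /= /andP[exy pt].
rewrite /walk_edges /= in_cons negb_or => /andP[fxy fw].
by rewrite /Ecut exy eq_sym fxy /=; apply: IH.
Qed.

Lemma on_pathE f x y : (exists p q, e p q /\ f = [set p; q]) ->
  on_path e x y f = ~~ connect (Ecut f) x y.
Proof.
move=> [p [q [epq ->]]]; apply/idP/idP.
  case/existsP => k /existsP [t /and4P [pt /eqP lt ut ft]].
  by rewrite -lt; apply: walk_sep.
move=> H; have := econn x y; case/connectP => t pt ly; move: ly.
case/shortenP: pt => t' pt' ut' _ ly.
have Hs : size t' < #|V|.
  have := max_card (mem (x :: t')); rewrite (card_uniqP ut') /=; done.
apply/existsP; exists (Ordinal Hs); apply/existsP; exists (in_tuple t').
rewrite pt' -ly eqxx ut' /=.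
apply/negPn/negP => nf; move/negP: H; apply.
by rewrite ly; apply/connectP; exists t' => //; apply: walk_avoid.
Qed.


Lemma nb1 a v y : deg e a = 1 -> e a v -> e a y -> y = v.
Proof.
rewrite /deg => /eqP /cards1P [w Hw] eav eay.
have : v \in [set w' | e a w'] by rewrite inE.
have : y \in [set w' | e a w'] by rewrite inE.
by rewrite Hw !inE => /eqP -> /eqP ->.
Qed.

Lemma branch u z : z != u ->
  exists m, e u m /\ forall n, e u n -> side u n z = (n == m).
Proof.
move=> zu; have := econn z u; case/connectP => t pt lt; move: lt.
case/shortenP: pt => t' pt' ut' _.
case/lastP: t' pt' ut' => [|t1 l] pt' ut'.
  by move=> /= H; rewrite H eqxx in zu.
rewrite last_rcons => lu; subst l.
move: pt'; rewrite rcons_path => /andP [pt1 emu].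
have unin : u \notin z :: t1.
  by move: ut'; rewrite -rcons_cons rcons_uniq => /andP[].
exists (last z t1); split; first by rewrite esym.
move=> n eun; rewrite /side.
case: (eqVneq n (last z t1)) => [-> | nm].
  by rewrite cS; apply: path_avoid.
apply/negP => H.
have H1 : connect (Ecut [set u; n]) z u.
  apply: connect_trans (path_avoid n pt1 unin) (connect1 _).
  rewrite /Ecut emu /=; apply/negP => /eqP Heq.
  have : last z t1 \in [set u; n] by rewrite -Heq !inE eqxx.
  rewrite !inE => /orP [/eqP mu | /eqP mn].
    by rewrite mu eirr in emu.
  by rewrite mn eqxx in nm.
have := cutA eun; apply/negP/negPn; rewrite cS; exact: connect_trans H H1.
Qed.

Lemma branch_uniq u z n n' : z != u -> e u n -> e u n' ->
  side u n z -> side u n' z -> n = n'.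
Proof.
move=> zu eun eun' s1 s2; have [m [_ Hm]] := branch zu.
by move: s1 s2; rewrite (Hm _ eun) (Hm _ eun') => /eqP -> /eqP ->.
Qed.

Lemma far_branch p q u z1 z2 n : e p q ->
  ~~ connect (Ecut [set p; q]) u z1 -> ~~ connect (Ecut [set p; q]) u z2 ->
  side u n z1 -> side u n z2.
Proof.
move=> epq f1 f2.
have c12 : connect (Ecut [set p; q]) z1 z2.
  move: f1 f2; rewrite (sep_bits u z1 epq) (sep_bits u z2 epq) (sep_bits z1 z2 epq).
  case: (connect (Ecut [set p; q]) p u); case: (connect (Ecut [set p; q]) p z1);
    case: (connect (Ecut [set p; q]) p z2); done.
case/connectP: c12 => t pt lt.
have unin : u \notin z1 :: t.
  apply/negP => ut; have := path_connect pt ut => H.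
  by move: f1; rewrite cS H.
have := path_avoid n (sub_path (@Ecut_sub _) pt) unin; rewrite -lt => H.
rewrite /side => s1; exact: connect_trans s1 H.
Qed.

Lemma leaf_only a v z : deg e a = 1 -> e a v -> side v a z -> z = a.
Proof.
move=> da eav /connectP [[|y t] pt ->] //.
move: pt => /= /andP [/andP [eay ne] _].
have yv := nb1 da eav eay; subst y.
by rewrite setUC eqxx in ne.
Qed.

Lemma nbr_exists x y : x != y -> exists w, e x w.
Proof.
move=> xy; have := econn x y; case/connectP => [[|w t]] /= pt lt.
  by rewrite lt eqxx in xy.
by exists w; case/andP: pt.
Qed.

Lemma deg_gt0 x w : e x w -> 0 < deg e x.
Proof. by move=> exw; apply/card_gt0P; exists w; rewrite inE. Qed.

Lemma nb_last y x s : path e x s -> uniq (x :: s) -> y \in x :: s ->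
  e (last x s) y -> exists s1, x :: s = rcons (rcons s1 y) (last x s).
Proof.
elim: s x => [|w s IH] x.
  by rewrite mem_seq1 => _ _ /eqP -> /=; rewrite eirr.
move=> /= /andP [exw pws] /andP [xnin uws].
rewrite in_cons => /orP [/eqP yx | yin] ely.
  subst y; case: s IH pws uws xnin ely => [|w' s] IH pws uws xnin ely.
    by exists [::].
  exfalso.
  have Hu : uniq [:: x, w, w' & s] by apply/andP; split.
  have := eacyc Hu isT; apply/negP; rewrite negbK /cycle rcons_path.
  by apply/andP; split => //; apply/andP; split.
have [s1 Hs1] := IH w pws uws yin ely.
by exists (x :: s1); rewrite Hs1.
Qed.

Lemma leaf_ext p q k : e p q -> forall t, #|V| <= size t + k -> path e q t ->
  uniq [:: p, q & t] -> exists z, deg e z = 1 /\ side p q z.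
Proof.
move=> epq; elim: k => [|k IH] t Hk pt ut.
  have := max_card (mem (p :: q :: t)); rewrite (card_uniqP ut) /=.
  move: Hk; rewrite addn0 => H1 H2; exfalso; move: (leq_trans H2 H1); lia.
have pnin : p \notin q :: t by case/andP: ut.
case: (eqVneq (deg e (last q t)) 1) => [dz | dz].
  by exists (last q t); split => //; rewrite /side; apply: path_avoid.
have zp : last q t != p.
  by apply/negP => /eqP H; move: pnin; rewrite -H mem_last.
have [w ezw] := nbr_exists zp.
have pqt : path e p (q :: t) by rewrite /= epq pt.
have [y /andP [ezy ynin]] : exists y, e (last q t) y && (y \notin [:: p, q & t]).
  case: (pickP (fun y => e (last q t) y && (y \notin [:: p, q & t]))) => [y Hy | none].
    by exists y.
  exfalso; move/eqP: dz; apply.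
  have inL y : e (last q t) y -> y \in [:: p, q & t].
    by move=> ey; have := none y; rewrite ey /= => /negbFE.
  have eqw y : e (last q t) y -> y = w.
    move=> ey.
    have [s1 H1] := nb_last pqt ut (inL y ey) ey.
    have [s2 H2] := nb_last pqt ut (inL w ezw) ezw.
    by move: H1; rewrite H2 => /rcons_inj [] /rcons_inj [].
  apply/eqP; rewrite eqn_leq (deg_gt0 ezw) andbT /deg.
  rewrite -(cards1 w); apply: subset_leq_card; apply/subsetP => y.
  by rewrite !inE => /eqw ->.
apply: (IH (rcons t y)).
- by rewrite size_rcons addSnnS.
- by rewrite rcons_path pt ezy.
- by rewrite -!rcons_cons rcons_uniq ynin ut.
Qed.

Lemma leaf_exists p q : e p q -> exists z, deg e z = 1 /\ side p q z.
Proof.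
move=> epq; apply: (leaf_ext (k := #|V|) epq (t := [::])) => //.
rewrite /= inE andbT; apply/negP => /eqP pq; subst; by rewrite eirr in epq.
Qed.

Lemma no_single_edge u w : 3 <= #|[set v | deg e v == 1]| -> e u w ->
  deg e u = 1 -> deg e w = 1 -> False.
Proof.
move=> H3 euw du dw.
have sub : [set v | deg e v == 1] \subset [set u; w].
  apply/subsetP => z _; have := econn u z; case/connectP => t pt ->.
  suff H : forall x s, path e x s -> x \in [set u; w] -> last x s \in [set u; w].
    by apply: H pt _; rewrite !inE eqxx.
  move=> x s; elim: s x => // y s IH x /= /andP [exy ps] xin; apply: IH ps _.
  move: xin; rewrite !inE => /orP [/eqP xu | /eqP xw]; subst x.
    by rewrite (nb1 du euw exy) eqxx orbT.
  by rewrite (nb1 dw (_ : e w u) exy) ?eqxx // esym.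
have := subset_leq_card sub; rewrite cards2; case: (u != w) => /=; lia.
Qed.

Local Notation E := Ecut.

Lemma mkE_proof0 p q : e p q -> [set p; q] \in Edges e.
Proof. by move=> epq; apply/imsetP; exists (p, q); rewrite ?inE. Qed.

Lemma set2_eq (a b x y : V) : a != b -> [set x; y] = [set a; b] ->
  (x = a /\ y = b) \/ (x = b /\ y = a).
Proof.
move=> ab H.
have hx : x \in [set a; b] by rewrite -H !inE eqxx.
have hy : y \in [set a; b] by rewrite -H !inE eqxx orbT.
have ha : a \in [set x; y] by rewrite H !inE eqxx.
have hb : b \in [set x; y] by rewrite H !inE eqxx orbT.
move: hx hy; rewrite !inE => /orP [] /eqP hx /orP [] /eqP hy; subst x y.
- by move: hb; rewrite !inE orbb => /eqP hb; rewrite hb eqxx in ab.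
- by left.
- by right.
- by move: ha; rewrite !inE orbb => /eqP ha; rewrite ha eqxx in ab.
Qed.

Lemma nb_avoid u (A : {set V}) : (#|A| < deg e u)%N -> exists n, e u n && (n \notin A).
Proof.
move=> H; case: (pickP (fun n => e u n && (n \notin A))) => [n Hn | none].
  by exists n.
exfalso; move: H; rewrite /deg ltnNge => /negP; apply.
apply: subset_leq_card; apply/subsetP => n; rewrite inE => eun.
by have := none n; rewrite eun /= => /negbFE.
Qed.

Lemma nb_avoid2 u (A : {set V}) : (#|A|.+1 < deg e u)%N ->
  exists n1 n2, [/\ e u n1, e u n2, n1 != n2, n1 \notin A & n2 \notin A].
Proof.
move=> H.
have [n1 /andP [e1 n1A]] := nb_avoid (ltnW H).
have H2 : (#|n1 |: A| < deg e u)%N.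
  by apply: leq_ltn_trans H; rewrite cardsU1; case: (n1 \notin A).
have [n2 /andP [e2]] := nb_avoid H2.
rewrite !inE negb_or => /andP [n21 n2A].
by exists n1, n2; split => //; rewrite eq_sym.
Qed.

Lemma deg3 u w : e u w -> deg e u != 1 -> (3 <= deg e u)%N.
Proof.
move=> euw d1; have := deg_gt0 euw; have := nodeg2 u; move: d1.
case: (deg e u) => [|[|[|k]]] //.
Qed.

Lemma deg_ne z u : deg e z = 1 -> deg e u != 1 -> z != u.
Proof. by move=> dz du; apply/negP => /eqP H; rewrite -H dz in du. Qed.

Lemma far_leaf a u p q z : deg e a = 1 -> e a u -> e p q -> z != a ->
  ~~ connect (E [set p; q]) u a -> connect (E [set p; q]) u z.
Proof.
move=> da eau epq za fa; apply/negPn/negP => fz.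
have := far_branch (n := a) epq fa fz (connect0 _ _) => /(leaf_only da eau) H.
by rewrite H eqxx in za.
Qed.

Lemma far_two p q u z1 z2 n1 n2 : e p q -> z2 != u -> e u n1 -> e u n2 ->
  n1 != n2 -> side u n1 z1 -> side u n2 z2 ->
  connect (E [set p; q]) u z1 || connect (E [set p; q]) u z2.
Proof.
move=> epq z2u e1 e2 n12 s1 s2; apply/negPn/negP; rewrite negb_or => /andP [f1 f2].
have := far_branch epq f1 f2 s1 => s12.
by have := branch_uniq z2u e1 e2 s12 s2 => H; rewrite H eqxx in n12.
Qed.

Lemma diff_branch u z1 z2 n1 n2 : z1 != u -> e u n1 -> e u n2 -> n1 != n2 ->
  side u n1 z1 -> side u n2 z2 -> z1 != z2.
Proof.
move=> z1u e1 e2 n12 s1 s2; apply/negP => /eqP H; subst z2.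
by have := branch_uniq z1u e1 e2 s1 s2 => H; rewrite H eqxx in n12.
Qed.

Lemma on_cordE x y f : x != y -> (exists p q, e p q /\ f = [set p; q]) ->
  on_cord_path e [set x; y] f = ~~ connect (E f) x y.
Proof.
move=> xy fe; apply/idP/idP.
  case/exists_inP => x0 x0in /exists_inP [y0 y0in /andP [ne op]].
  rewrite on_pathE // in op.
  move: x0in y0in ne op; rewrite !inE => /orP [] /eqP -> /orP [] /eqP ->;
    rewrite ?eqxx //; by rewrite cS.
move=> H; apply/exists_inP; exists x; first by rewrite !inE eqxx.
apply/exists_inP; exists y; first by rewrite !inE eqxx orbT.
by rewrite xy on_pathE.
Qed.

Lemma pendantE a u : deg e a = 1 -> e a u -> pendant_edge e a = [set a; u].
Proof.
move=> da eau; rewrite /pendant_edge.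
case: pickP => [f /andP [fE af] | none].
  change (f = [set a; u]).
  case/imsetP: fE => [[p q]]; rewrite inE => epq fpq; subst f.
  change (is_true (e p q)) in epq; change ([set p; q] = [set a; u]).
  change (is_true (a \in [set p; q])) in af.
  move: af; rewrite !inE => /orP [] /eqP H; subst a.
    by rewrite (nb1 da eau epq).
  have eqp : e q p by rewrite esym.
  by rewrite (nb1 da eau eqp) setUC.
have H := none [set a; u]; cbv beta in H.
by rewrite (mkE_proof0 eau) setU11 in H.
Qed.

Lemma good_pair u w : e u w -> exists x1 x2, [/\ deg e x1 = 1, deg e x2 = 1,
  connect (E [set u; w]) u x1, connect (E [set u; w]) u x2 &
  forall p q, e p q ->
    (connect (E [set p; q]) u x1 || connect (E [set p; q]) u x2) /\
    forall z, side u w z ->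
      (connect (E [set p; q]) u x1 || connect (E [set p; q]) u z) &&
      (connect (E [set p; q]) u x2 || connect (E [set p; q]) u z)].
Proof.
move=> euw; case: (eqVneq (deg e u) 1) => [du | du].
  exists u; exists u; split => //; try exact: connect0.
  by move=> p q epq; split => [|z _]; rewrite connect0.
have d3 := deg3 euw du.
have [n1 [n2 [e1 e2 n12]]] : exists n1 n2, [/\ e u n1, e u n2, n1 != n2, n1 \notin [set w] & n2 \notin [set w]].
  by apply: nb_avoid2; rewrite cards1.
rewrite !inE => n1w n2w.
have [x1 [dx1 s1]] := leaf_exists e1.
have [x2 [dx2 s2]] := leaf_exists e2.
have x1u := deg_ne dx1 du; have x2u := deg_ne dx2 du.
have cx : forall x n, x != u -> e u n -> n != w -> side u n x ->
    connect (E [set u; w]) u x.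
  move=> x n xu eun nw sx; have := two_sides u w x; case/orP => // H.
  by have := branch_uniq xu euw eun H sx => wn; rewrite wn eqxx in nw.
exists x1; exists x2; split => //.
- exact: (cx x1 n1 x1u e1 n1w s1).
- exact: (cx x2 n2 x2u e2 n2w s2).
move=> p q epq; split; first exact: (far_two epq x2u e1 e2 n12 s1 s2).
move=> z sz.
have zu : z != u.
  apply/negP => /eqP zu; subst z; have := cutA euw; rewrite cS -/(side u w u); by rewrite sz.
by rewrite (far_two epq zu e1 euw n1w s1 sz) (far_two epq zu e2 euw n2w s2 sz).
Qed.

Import GRing.Theory Num.Theory.
Variable R : realFieldType.
Local Open Scope ring_scope.


Lemma edge_ex (f : edgeT e) : exists p q, e p q /\ val f = [set p; q].
Proof.
case: f => f /= /imsetP [[p q]]; rewrite inE /= => epq ->; by exists p, q.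
Qed.


Definition mkE p q (H : e p q) : edgeT e := exist _ [set p; q] (mkE_proof0 H).

Definition Lv (x y : V) : {ffun edgeT e -> R^o} :=
  [ffun f => (~~ connect (E (val f)) x y)%:R].

Lemma LvE x y (g : edgeT e) p q : e p q -> val g = [set p; q] ->
  Lv x y g = ((connect (E [set p; q]) p x) != (connect (E [set p; q]) p y))%:R.
Proof. by move=> epq vg; rewrite ffunE vg sep_bits. Qed.

Lemma cutUW p q x : e p q -> connect (E [set p; q]) p x = ~~ side p q x.
Proof.
move=> epq; rewrite /side.
have := two_sides p q x; have := cutA epq.
case Hp: (connect (E [set p; q]) p x); case Hq: (connect (E [set p; q]) q x) => //=.
move=> /negP H _; exfalso; apply: H; apply: connect_trans Hp _; by rewrite cS.
Qed.

Lemma lamE x y : x != y -> lam e R [set x; y] = Lv x y.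
Proof.
move=> xy; apply/ffunP => f; rewrite !ffunE on_cordE //.
have [p [q [epq ->]]] := edge_ex f; by exists p, q.
Qed.

Lemma dimF : \dim (fullv : {vspace {ffun edgeT e -> R^o}}) = #|Edges e|.
Proof. by rewrite dimvf /dim /= muln1 card_sig. Qed.

Lemma cherry_coloop a b v : deg e a = 1%N -> deg e b = 1%N -> a != b ->
  e a v -> e b v -> deg e v = 3%N ->
  forall L, is_lasso e R [set z | deg e z == 1%N] L -> [set a; b] \in L.
Proof.
move=> da db ab eav ebv dv L [Lsub Lrk].
apply/negPn/negP => nab.
have eva : e v a by rewrite esym.
have evb : e v b by rewrite esym.
have dv1 : deg e v != 1%N by rewrite dv.
have [g /andP [evg]] : exists g, e v g && (g \notin [set a; b]).
  by apply: nb_avoid; rewrite cards2 dv; case: (a != b).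
rewrite !inE negb_or => /andP [ga gb].
have nbr3 : forall n, e v n -> [|| n == a, n == b | n == g].
  move=> n evn; apply/negPn/negP; rewrite !negb_or => /and3P [na nb ng].
  have sA : [set a; b] \subset [set z | e v z].
    by apply/subsetP => z; rewrite !inE => /orP [] /eqP ->.
  have H := cardsD [set z | e v z] [set a; b].
  rewrite (setIidPr sA) cards2 ab in H.
  have : (#|[set g; n]| <= #|[set z | e v z] :\: [set a; b]|)%N.
    apply: subset_leq_card; apply/subsetP => z; rewrite !inE.
    by case/orP => /eqP ->; rewrite ?(negbTE ga) ?(negbTE gb) ?(negbTE na) ?(negbTE nb) ?evg ?evn.
  by rewrite cards2 H -/(deg e v) dv eq_sym ng.
have r1 : (a == b) = false by apply/negbTE.
have r2 : (b == a) = false by rewrite eq_sym; apply/negbTE.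
have r3 : (a == g) = false by rewrite eq_sym; apply/negbTE.
have r4 : (g == a) = false by apply/negbTE.
have r5 : (b == g) = false by rewrite eq_sym; apply/negbTE.
have r6 : (g == b) = false by apply/negbTE.
pose Ea := mkE eva; pose Eb := mkE evb; pose Eg := mkE evg.
pose phi (w : {ffun edgeT e -> R^o}) := w Ea + w Eb - w Eg.
have phiLv : forall x y, deg e x = 1%N -> deg e y = 1%N -> x != y ->
    [set x; y] != [set a; b] -> phi (Lv x y) = 0.
  move=> x y dx dy xy xyab.
  have xv := deg_ne dx dv1; have yv := deg_ne dy dv1.
  have [mx [evmx Hx]] := branch xv; have [my [evmy Hy]] := branch yv.
  have LvEv : forall n (H : e v n), Lv x y (mkE H) = ((n == mx) != (n == my))%:R.
    move=> n H; rewrite (@LvE x y (mkE H) v n H erefl) !cutUW // (Hx n H) (Hy n H).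
    by case: (n == mx); case: (n == my).
  have hxa : mx = a -> x = a.
    by move=> E1; apply: (leaf_only da eav); rewrite /side -/(side v a x) (Hx a eva) E1 eqxx.
  have hxb : mx = b -> x = b.
    by move=> E1; apply: (leaf_only db ebv); rewrite -/(side v b x) (Hx b evb) E1 eqxx.
  have hya : my = a -> y = a.
    by move=> E1; apply: (leaf_only da eav); rewrite -/(side v a y) (Hy a eva) E1 eqxx.
  have hyb : my = b -> y = b.
    by move=> E1; apply: (leaf_only db ebv); rewrite -/(side v b y) (Hy b evb) E1 eqxx.
  rewrite /phi !LvEv.
  move: (nbr3 _ evmx) (nbr3 _ evmy).
  case/or3P => /eqP Emx; case/or3P => /eqP Emy; rewrite Emx Emy.
  - by rewrite ?eqxx ?r1 ?r2 ?r3 ?r4 ?r5 ?r6 /=; ring.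
  - by rewrite (hxa Emx) (hyb Emy) eqxx in xyab.
  - by rewrite ?eqxx ?r1 ?r2 ?r3 ?r4 ?r5 ?r6 /=; ring.
  - by rewrite (hxb Emx) (hya Emy) setUC eqxx in xyab.
  - by rewrite ?eqxx ?r1 ?r2 ?r3 ?r4 ?r5 ?r6 /=; ring.
  - by rewrite ?eqxx ?r1 ?r2 ?r3 ?r4 ?r5 ?r6 /=; ring.
  - by rewrite ?eqxx ?r1 ?r2 ?r3 ?r4 ?r5 ?r6 /=; ring.
  - by rewrite ?eqxx ?r1 ?r2 ?r3 ?r4 ?r5 ?r6 /=; ring.
  - by rewrite ?eqxx ?r1 ?r2 ?r3 ?r4 ?r5 ?r6 /=; ring.
pose s := [seq lam e R c | c <- enum L].
have Sfull : (<<s>> = fullv)%VS.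
  by apply/eqP; rewrite eqEdim subvf /= dimF -Lrk /rkT leqnn.
pose d : {ffun edgeT e -> R^o} := [ffun f => (f == Ea)%:R].
have dS : d \in <<s>>%VS by rewrite Sfull memvf.
have Hd := @coord_span _ _ _ (in_tuple s) d dS.
have := congr1 phi Hd.
have nE : forall n m (H1 : e v n) (H2 : e v m), n != m -> (mkE H1 == mkE H2) = false.
  move=> n m H1 H2 nm; apply/negbTE; rewrite -val_eqE /=; apply/negP => /eqP H.
  have vm : v != m by apply/negP => /eqP vm; rewrite vm eirr in H2.
  case: (set2_eq vm H) => [[_ nm'] | [vm' _]].
    by rewrite nm' eqxx in nm.
  by rewrite vm' eqxx in vm.
have p1 : phi d = 1.
  have nba : b != a by rewrite eq_sym.
  rewrite /phi /d !ffunE eqxx /Ea /Eb /Eg (nE _ _ evb eva nba) (nE _ _ evg eva ga) /=.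
  by ring.
have p0 : phi (\sum_i coord (in_tuple s) i d *: (in_tuple s)`_i) = 0.
  rewrite /phi !sum_ffunE -big_split -sumrB /=; apply: big1 => i _.
  have Hi : phi ((in_tuple s)`_i) = 0.
    have : nth 0 s i \in s by apply: mem_nth; exact: ltn_ord.
    case/mapP => c cL ->; rewrite mem_enum in cL.
    have := Lsub c cL; rewrite /is_cord => /andP [cX /cards2P [x [y [xy cE]]]].
    subst c; rewrite lamE //; apply: phiLv => //.
    - by have := subsetP cX x; rewrite !inE eqxx => /(_ isT) /eqP.
    - by have := subsetP cX y; rewrite !inE eqxx orbT => /(_ isT) /eqP.
    - by apply/negP => /eqP H; rewrite -H cL in nab.
  rewrite /phi in Hi; rewrite !ffunE -scalerDr -scalerBr Hi scaler0 //.
by rewrite p1 p0 => /eqP; rewrite oner_eq0.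
Qed.

Lemma bits_i (A B C D U : bool) : (U == A) || [&& U == B, U == C & U == D] ->
  (U == B) || [&& U == A, U == C & U == D] -> (U == C) || (U == D) ->
  (A != B)%:R = (A != C)%:R + (B != D)%:R - (C != D)%:R :> R.
Proof. case: A; case: B; case: C; case: D; case: U => //= _ _ _; ring. Qed.

Lemma bits_ii (A B C D U W : bool) : (U == A) || [&& U == B, U == C & U == D] ->
  (W == B) || [&& W == A, W == C & W == D] -> (U == C) || (U == D) ->
  (U == C) || (U == W) ->
  (A != B)%:R = (A != D)%:R + (C != B)%:R - (C != D)%:R :> R.
Proof. case: A; case: B; case: C; case: D; case: U; case: W => //= _ _ _ _; ring. Qed.

Lemma bits_f (U W X1 X2 Y1 Y2 : bool) : U != W -> U == X1 -> U == X2 ->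
  W == Y1 -> W == Y2 ->
  2%:R * 1 = (X1 != Y1)%:R + (X2 != Y2)%:R - (X1 != X2)%:R - (Y1 != Y2)%:R :> R.
Proof. case: X1; case: X2; case: Y1; case: Y2; case: U; case: W => //= _ _ _ _ _; ring. Qed.

Lemma bits_nf (U W X1 X2 Y1 Y2 : bool) : U == W -> (U == X1) || (U == X2) ->
  (W == Y1) || (W == Y2) -> (U == X1) || (U == Y1) -> (U == X1) || (U == Y2) ->
  (U == X2) || (U == Y1) -> (U == X2) || (U == Y2) ->
  2%:R * 0 = (X1 != Y1)%:R + (X2 != Y2)%:R - (X1 != X2)%:R - (Y1 != Y2)%:R :> R.
Proof. case: X1; case: X2; case: Y1; case: Y2; case: U; case: W => //= *; ring. Qed.

Lemma delta_in (S : {vspace {ffun edgeT e -> R^o}}) :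
  (forall x y, deg e x = 1%N -> deg e y = 1%N -> Lv x y \in S) ->
  forall f : edgeT e, [ffun g => (g == f)%:R] \in S.
Proof.
move=> HS f.
have [u [w [euw vf]]] := edge_ex f.
have ewu : e w u by rewrite esym.
have [x1 [x2 [dx1 dx2 cx1 cx2 Hx]]] := good_pair euw.
have [y1 [y2 [dy1 dy2 cy1 cy2 Hy]]] := good_pair ewu.
rewrite setUC in cy1; rewrite setUC in cy2.
have key : 2%:R *: [ffun g => (g == f)%:R] =
    Lv x1 y1 + Lv x2 y2 - Lv x1 x2 - Lv y1 y2 :> {ffun edgeT e -> R^o}.
  apply/ffunP => g; rewrite !ffunE.
  have [p [q [epq vg]]] := edge_ex g.
  rewrite vg (sep_bits x1 y1 epq) (sep_bits x2 y2 epq) (sep_bits x1 x2 epq) (sep_bits y1 y2 epq).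
  case: (eqVneq g f) => [gf | gf].
    subst g; rewrite vf in vg; rewrite vg in cx1 cx2 cy1 cy2.
    have cuw := cutA euw; rewrite vg in cuw.
    rewrite (sep_bits u x1 epq) in cx1; rewrite (sep_bits u x2 epq) in cx2.
    rewrite (sep_bits w y1 epq) in cy1; rewrite (sep_bits w y2 epq) in cy2.
    rewrite (sep_bits u w epq) in cuw.
    exact: (bits_f cuw cx1 cx2 cy1 cy2).
  have ne : [set p; q] != [set u; w].
    by rewrite -vg -vf (inj_eq val_inj).
  have cuw : connect (E [set p; q]) u w.
    by apply: connect1; rewrite /Ecut euw eq_sym ne.
  have [hx1 hx2] := Hx p q epq; have [hy1 _] := Hy p q epq.
  have := hx2 y1 cy1; have := hx2 y2 cy2.
  rewrite (sep_bits u x1 epq) (sep_bits u x2 epq) (sep_bits u y1 epq) (sep_bits u y2 epq).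
  case/andP => c12 c22; case/andP => c11 c21.
  rewrite (sep_bits u x1 epq) (sep_bits u x2 epq) in hx1.
  rewrite (sep_bits w y1 epq) (sep_bits w y2 epq) in hy1.
  rewrite (sep_bits u w epq) in cuw.
  exact: (bits_nf cuw hx1 hy1 c11 c12 c21 c22).
have two0 : (2%:R : R) != 0 by rewrite pnatr_eq0.
have -> : [ffun g => (g == f)%:R] =
    (2%:R)^-1 *: (Lv x1 y1 + Lv x2 y2 - Lv x1 x2 - Lv y1 y2) :> {ffun _ -> R^o}.
  by rewrite -key scalerA mulVf // scale1r.
by apply: memvZ; rewrite !(rpredB, rpredD) // HS.
Qed.

Lemma span_full (S : {vspace {ffun edgeT e -> R^o}}) :
  (forall x y, deg e x = 1%N -> deg e y = 1%N -> Lv x y \in S) -> S = fullv.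
Proof.
move=> HS; apply/eqP; rewrite eqEsubv subvf /=; apply/subvP => v _.
have -> : v = \sum_f v f *: [ffun g => (g == f)%:R] :> {ffun _ -> R^o}.
  apply/ffunP => g; rewrite sum_ffunE (bigD1 g) //= big1 ?addr0.
    by rewrite !ffunE eqxx /= mulr1n /GRing.scale /= mulr1.
  by move=> h hg; rewrite !ffunE eq_sym (negbTE hg) /= mulr0n /GRing.scale /= mulr0.
by apply: memv_suml => f _; apply: memvZ; apply: delta_in.
Qed.

Lemma Lv0 x : Lv x x = 0.
Proof. by apply/ffunP => g; rewrite !ffunE connect0. Qed.

Lemma LvC x y : Lv x y = Lv y x.
Proof. by apply/ffunP => g; rewrite !ffunE cS. Qed.

Lemma Lab_in (S : {vspace {ffun edgeT e -> R^o}}) a b :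
  deg e a = 1%N -> deg e b = 1%N -> a != b -> ~~ is_proper_cherry e a b ->
  (forall x y, deg e x = 1%N -> deg e y = 1%N -> x != y ->
     [set x; y] != [set a; b] -> Lv x y \in S) ->
  Lv a b \in S.
Proof.
move=> da db ab npc HS.
have HS' : forall x y, deg e x = 1%N -> deg e y = 1%N ->
    (x \notin [set a; b]) || (y \notin [set a; b]) -> Lv x y \in S.
  move=> x y dx dy nxy; case: (eqVneq x y) => [<- | xy].
    by rewrite Lv0 mem0v.
  apply: HS => //; apply/negP => /eqP H.
  by move: nxy; rewrite -H !inE !eqxx ?orbT.
have [u eau] := nbr_exists ab.
have ba : b != a by rewrite eq_sym.
have [w ebw] := nbr_exists ba.
have eua : e u a by rewrite esym.
have ewb : e w b by rewrite esym.
have du : deg e u != 1%N by apply/eqP => du1; apply: (no_single_edge HX3 eau da du1).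
have dw : deg e w != 1%N by apply/eqP => dw1; apply: (no_single_edge HX3 ebw db dw1).
have du3 := deg3 eua du; have dw3 := deg3 ewb dw.
have bu := deg_ne db du; have au := deg_ne da du.
have pea := pendantE da eau; have peb := pendantE db ebw.
have saa : side u a a by apply: connect0.
have sbb : side w b b by apply: connect0.
case: (eqVneq u w) => [uw | uw].
  subst w.
  have du4 : (3 < deg e u)%N.
    rewrite ltn_neqAle du3 andbT; apply/negP => /eqP d3.
    move/negP: npc; apply; apply/existsP; exists u.
    by rewrite pea peb !inE !eqxx !orbT -d3 eqxx.
  have H4 : (#|[set a; b]|.+1 < deg e u)%N by rewrite cards2 ab.
  have [n [n' [en en' nn' na n'a]]] := nb_avoid2 H4.
  rewrite !inE !negb_or in na n'a.
  case/andP: na => na nb; case/andP: n'a => n'a n'b.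
  have [c [dc sc]] := leaf_exists en; have [d [dd sd]] := leaf_exists en'.
  have cu := deg_ne dc du; have du' := deg_ne dd du.
  have sbb' : side u b b by apply: connect0.
  have ca := diff_branch cu en eua na sc saa.
  have cb := diff_branch cu en ewb nb sc sbb'.
  have d_a := diff_branch du' en' eua n'a sd saa.
  have d_b := diff_branch du' en' ewb n'b sd sbb'.
  have cn : c \notin [set a; b] by rewrite !inE negb_or ca cb.
  have dn : d \notin [set a; b] by rewrite !inE negb_or d_a d_b.
  have -> : Lv a b = Lv a c + Lv b d - Lv c d.
    apply/ffunP => g; rewrite !ffunE.
    have [p [q [epq vg]]] := edge_ex g.
    rewrite vg (sep_bits a b epq) (sep_bits a c epq) (sep_bits b d epq) (sep_bits c d epq).
    have h1 : connect (E [set p; q]) u a ||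
        [&& connect (E [set p; q]) u b, connect (E [set p; q]) u c
          & connect (E [set p; q]) u d].
      case: (boolP (connect (E [set p; q]) u a)) => // fa; rewrite orFb.
      by rewrite (far_leaf da eau epq ba fa) (far_leaf da eau epq ca fa) (far_leaf da eau epq d_a fa).
    have h2 : connect (E [set p; q]) u b ||
        [&& connect (E [set p; q]) u a, connect (E [set p; q]) u c
          & connect (E [set p; q]) u d].
      case: (boolP (connect (E [set p; q]) u b)) => // fb; rewrite orFb.
      by rewrite (far_leaf db ebw epq ab fb) (far_leaf db ebw epq cb fb) (far_leaf db ebw epq d_b fb).
    have h3 := far_two epq du' en en' nn' sc sd.
    move: h1 h2 h3.
    rewrite (sep_bits u a epq) (sep_bits u b epq) (sep_bits u c epq) (sep_bits u d epq).
    exact: bits_i.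
  by rewrite !(rpredB, rpredD) // HS' // ?cn ?dn ?orbT.
have wu : w != u by rewrite eq_sym.
have [t [eut Ht]] := branch wu.
have [s0 [ews Hs]] := branch uw.
have sut : side u t w by rewrite Ht // eqxx.
have [n /andP [en]] : exists n, e u n && (n \notin [set a; t]).
  by apply: nb_avoid; apply: leq_trans du3; rewrite cards2; case: (a != t).
rewrite !inE negb_or => /andP [na nt].
have [n' /andP [en']] : exists n', e w n' && (n' \notin [set b; s0]).
  by apply: nb_avoid; apply: leq_trans dw3; rewrite cards2; case: (b != s0).
rewrite !inE negb_or => /andP [n'b n's].
have [c [dc sc]] := leaf_exists en; have [d [dd sd]] := leaf_exists en'.
have cu := deg_ne dc du; have dw' := deg_ne dd dw; have du' := deg_ne dd du.
have ta : t != a.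
  apply/negP => /eqP ta; have := sut; rewrite ta => /(leaf_only da eau) wa.
  have eab : e a b by rewrite -wa esym.
  by have := nb1 da eau eab => H; rewrite H eqxx in bu.
have sutb : side u t b.
  apply: connect_trans sut (connect1 _); rewrite /Ecut ewb /=.
  apply/negP => /eqP H; have : u \in [set w; b] by rewrite H !inE eqxx.
  by rewrite !inE (negbTE uw) /= eq_sym (negbTE bu).
have sutd : side u t d.
  have sn'u : ~~ connect (E [set w; n']) u n'.
    by rewrite cS -/(side w n' u) (Hs n' en').
  have sn'd : ~~ connect (E [set w; n']) u d.
    apply/negP => H; move/negP: sn'u; apply; apply: connect_trans H _.
    by rewrite cS.
  have sutn' : side u t n'.
    apply: connect_trans sut (connect1 _); rewrite /Ecut en' /=.
    apply/negP => /eqP H; have : u \in [set w; n'] by rewrite H !inE eqxx.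
    rewrite !inE (negbTE uw) /= => /eqP un'; subst n'.
    have us : u == s0 by rewrite -(Hs u en'); apply: connect0.
    by rewrite us in n's.
  exact: far_branch en' sn'u sn'd sutn'.
have ca := diff_branch cu en eua na sc saa.
have cb := diff_branch cu en eut nt sc sutb.
have d_a := diff_branch du' eut eua ta sutd saa.
have d_b := diff_branch dw' en' ewb n'b sd sbb.
have cn : c \notin [set a; b] by rewrite !inE negb_or ca cb.
have dn : d \notin [set a; b] by rewrite !inE negb_or d_a d_b.
have -> : Lv a b = Lv a d + Lv c b - Lv c d.
  apply/ffunP => g; rewrite !ffunE.
  have [p [q [epq vg]]] := edge_ex g.
  rewrite vg (sep_bits a b epq) (sep_bits a d epq) (sep_bits c b epq) (sep_bits c d epq).
  have h1 : connect (E [set p; q]) u a ||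
      [&& connect (E [set p; q]) u b, connect (E [set p; q]) u c
        & connect (E [set p; q]) u d].
    case: (boolP (connect (E [set p; q]) u a)) => // fa; rewrite orFb.
    by rewrite (far_leaf da eau epq ba fa) (far_leaf da eau epq ca fa) (far_leaf da eau epq d_a fa).
  have h2 : connect (E [set p; q]) w b ||
      [&& connect (E [set p; q]) w a, connect (E [set p; q]) w c
        & connect (E [set p; q]) w d].
    case: (boolP (connect (E [set p; q]) w b)) => // fb; rewrite orFb.
    by rewrite (far_leaf db ebw epq ab fb) (far_leaf db ebw epq cb fb) (far_leaf db ebw epq d_b fb).
  have h3 := far_two epq du' en eut nt sc sutd.
  have h4 := far_two epq wu en eut nt sc sut.
  move: h1 h2 h3 h4.
  rewrite (sep_bits u a epq) (sep_bits u b epq) (sep_bits u c epq) (sep_bits u d epq).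
  rewrite (sep_bits w a epq) (sep_bits w b epq) (sep_bits w c epq) (sep_bits w d epq).
  rewrite (sep_bits u w epq).
  exact: bits_ii.
by rewrite !(rpredB, rpredD) // HS' // ?cn ?dn ?orbT.
Qed.

Lemma main_in a b : deg e a = 1%N -> deg e b = 1%N -> a != b ->
  (forall L, is_lasso e R [set z | deg e z == 1%N] L -> [set a; b] \in L) <->
  is_proper_cherry e a b.
Proof.
move=> da db ab; split.
  move=> H; case: (boolP (is_proper_cherry e a b)) => // npc; exfalso.
  pose X := [set z | deg e z == 1%N].
  pose L := [set c | is_cord X c && (c != [set a; b])].
  pose S := <<[seq lam e R c | c <- enum L]>>%VS.
  have HS : forall x y, deg e x = 1%N -> deg e y = 1%N -> x != y ->
      [set x; y] != [set a; b] -> Lv x y \in S.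
    move=> x y dx dy xy xyab; rewrite -lamE //; apply: memv_span.
    apply/mapP; exists [set x; y] => //.
    rewrite mem_enum inE xyab andbT /is_cord cards2 xy andbT.
    by apply/subsetP => z; rewrite !inE => /orP [] /eqP ->; rewrite ?dx ?dy.
  have Sfull : S = fullv.
    apply: span_full => x y dx dy.
    case: (eqVneq x y) => [<- | xy]; first by rewrite Lv0 mem0v.
    case: (eqVneq [set x; y] [set a; b]) => [Hxy | Hxy]; last exact: HS.
    have Lab := Lab_in da db ab npc HS.
    by case: (set2_eq ab Hxy) => [[-> ->] | [-> ->]] //; rewrite LvC.
  have : [set a; b] \in L.
    apply: H; split.
      by move=> c; rewrite inE => /andP [].
    by rewrite /rkT -/S Sfull dimF.
  by rewrite inE eqxx andbF.
case/existsP => v /and3P [va vb /eqP dv].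
have [u eau] := nbr_exists ab.
have ba : b != a by rewrite eq_sym.
have [w ebw] := nbr_exists ba.
rewrite (pendantE da eau) !inE in va; rewrite (pendantE db ebw) !inE in vb.
have vA : v != a by apply/negP => /eqP H; rewrite H da in dv.
have vB : v != b by apply/negP => /eqP H; rewrite H db in dv.
rewrite (negbTE vA) /= in va; rewrite (negbTE vB) /= in vb.
move/eqP: va => va; move/eqP: vb => vb; subst u w.
exact: cherry_coloop da db ab eau ebw dv.
Qed.

End Graph.

Theorem mainTheorem6 (V : finType) (e : rel V) (X : {set V})
    (HT : is_Xtree e X) (HX : 3 <= #|X|) (R : realFieldType) (a b : V)
    (Hab : is_cord X [set a; b]) :
  (forall L : {set {set V}}, is_lasso e R X L -> [set a; b] \in L) <->
  is_proper_cherry e a b.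
Proof.
case: HT => [[esym eirr econn eacyc] HXdef nodeg2]; subst X.
move: Hab; rewrite /is_cord => /andP [Hsub /cards2P [x [y [xy Hxy]]]].
have ab : a != b.
  apply/negP => /eqP ab; subst b; move: Hxy; rewrite setUid => H.
  by move: (cards1 a); rewrite H cards2 xy.
have da : deg e a = 1.
  by have := subsetP Hsub a; rewrite !inE eqxx => /(_ isT) /eqP.
have db : deg e b = 1.
  by have := subsetP Hsub b; rewrite !inE eqxx orbT => /(_ isT) /eqP.
exact: (main_in esym eirr econn eacyc nodeg2 HX R da db ab).
Qed.
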